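(* Let $N\ge1$, $\Psi_N$ the $N\times N$ matrix $(\Psi_N)_{jk}=\binom{j}{k}$, $\Lambda_N=\mathrm{diag}(1,-1,\dots,(-1)^{N-1})$, and $J_N$ the $N\times N$ symmetric tridiagonal matrix with $(J_N)_{kk}=k(2k^2+3k+2-N^2)$ and $(J_N)_{k,k+1}=(J_N)_{k+1,k}=(k+1)(N^2-(k+1)^2)$. Then $$\Psi_N^{-1}J_N\Psi_N=-\Lambda_NJ_N\Lambda_N+(N^2-1)I_N,$$ and moreover $(\Psi_N\Lambda_N)^2=I_N$ and $\Psi_N^\intercal\Psi_N=\Lambda_NT_N^{-1}\Lambda_N$, where $(T_N)_{jk}=\binom{j+k}{j}$.
   Context: Matrix indices start at $0$; $I_N$ is the $N\times N$ identity matrix. *)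

(* Defs.v *)
From mathcomp Require Import all_boot all_order all_algebra.
Set Implicit Arguments. Unset Strict Implicit. Unset Printing Implicit Defensive.
Import Order.TTheory GRing.Theory Num.Theory.
Local Open Scope ring_scope.

Definition PsiN (N : nat) : 'M[rat]_N := \matrix_(j < N, k < N) ('C(j, k))%:R.

Definition LambdaN (N : nat) : 'M[rat]_N := diag_mx (\row_(i < N) (-1) ^+ i).

Definition TN (N : nat) : 'M[rat]_N := \matrix_(j < N, k < N) ('C(j + k, j))%:R.

Definition JN (N : nat) : 'M[rat]_N :=
  \matrix_(j < N, k < N)
    (if j == k :> nat then
       (k%:R : rat) * (2 * (k%:R) ^+ 2 + 3 * k%:R + 2 - (N%:R) ^+ 2)
     else if j == k.+1 :> nat then
       (k.+1%:R : rat) * ((N%:R) ^+ 2 - (k.+1%:R) ^+ 2)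
     else if k == j.+1 :> nat then
       (j.+1%:R : rat) * ((N%:R) ^+ 2 - (j.+1%:R) ^+ 2)
     else 0).

(* Main.v *)
Require Import Defs.
From mathcomp Require Import all_boot all_order all_algebra.
From mathcomp Require Import zify ring lra.
Import Order.TTheory GRing.Theory Num.Theory.
Local Open Scope ring_scope.

Lemma sum_ext (a b : nat) (F : nat -> rat) : (a <= b)%N ->
  (forall i, (a <= i)%N -> F i = 0) -> \sum_(0 <= i < a) F i = \sum_(i < b) F i.
Proof.
move=> hab H; rewrite -(big_mkord xpredT) (big_cat_nat (leq0n a) hab) /=.
rewrite [X in _ = _ + X]big_nat_cond [X in _ = _ + X]big1 ?addr0 // => i /andP[/andP[hi _] _].
exact: H.
Qed.

Lemma sum_tri (M c : nat) (F : nat -> rat) : (c.+1 < M)%N ->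
  (forall i, (i.+1 < c)%N || (c.+1 < i)%N -> F i = 0) ->
  \sum_(i < M) F i = (if c is c'.+1 then F c' else 0) + F c + F c.+1.
Proof.
move=> hM H; rewrite -(big_mkord xpredT) (big_cat_nat (leq0n c.+2) hM) /=.
rewrite [X in _ + X = _]big_nat_cond [X in _ + X = _]big1 ?addr0; last first.
  move=> i /andP[/andP[hi _] _]; apply: H; apply/orP; right; exact: hi.
case: c H hM => [|c'] H hM.
  by rewrite big_ltn // big_ltn // big_geq // addr0 add0r.
rewrite (big_cat_nat (leq0n c') (_ : (c' <= c'.+3)%N)) //=.
rewrite big_nat_cond big1 ?add0r; last first.
  move=> i /andP[/andP[_ hi] _]; apply: H; apply/orP; left; exact: hi.
rewrite big_ltn; last lia.
rewrite big_ltn; last lia.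
rewrite big_ltn; last lia.
by rewrite big_geq // addr0 !addrA.
lia.
Qed.

Lemma ss k : (-1:rat)^+k * (-1)^+k = 1.
Proof. by rewrite -exprMn mulrNN mulr1 expr1n. Qed.

Definition S (j k : nat) : rat :=
  \sum_(0 <= i < j.+1) (-1)^+i * ('C(j,i))%:R * ('C(i,k))%:R.

Lemma S_step j k : S j.+1 k = S j k -
  \sum_(0 <= i < j.+1) (-1)^+i * ('C(j,i))%:R * ('C(i.+1,k))%:R.
Proof.
rewrite /S big_nat_recl // expr0 bin0 !mul1r.
under eq_bigr => i _ do rewrite binS natrD mulrDr mulrDl.
rewrite big_split /= addrA.
rewrite -[X in X + _ = _](_ : \sum_(0 <= i < j.+2) (-1)^+i * ('C(j,i))%:R * ('C(i,k))%:R = _); last first.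
  by rewrite [LHS]big_nat_recl // expr0 bin0 !mul1r.
rewrite big_nat_recr //= bin_small // mulr0 mul0r addr0.
congr (_ + _); rewrite -sumrN; apply: eq_bigr => i _.
by rewrite exprS; ring.
Qed.

Lemma S_val j k : S j k = (-1)^+j * (j == k)%:R.
Proof.
elim: j k => [|j IH] k.
  by rewrite /S big_nat1 bin0 expr0 !mul1r bin0n eq_sym.
rewrite S_step; case: k => [|k].
  have -> : \sum_(0 <= i < j.+1) (-1)^+i * ('C(j,i))%:R * ('C(i.+1,0))%:R = S j 0.
    by apply: eq_bigr => i _; rewrite !bin0.
  by rewrite subrr mulr0.
have -> : \sum_(0 <= i < j.+1) (-1)^+i * ('C(j,i))%:R * ('C(i.+1,k.+1))%:R = S j k.+1 + S j k.
  rewrite /S -big_split /=; apply: eq_bigr => i _; rewrite binS natrD; ring.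
rewrite IH IH eqSS exprS; ring.
Qed.
Definition Jd (n : rat) (k : nat) : rat := (k%:R : rat) * (2 * (k%:R) ^+ 2 + 3 * k%:R + 2 - n ^+ 2).
Definition Ju (n : rat) (k : nat) : rat := (k.+1%:R : rat) * (n ^+ 2 - (k.+1%:R) ^+ 2).
Notation B a b := (('C(a, b))%:R : rat).

Lemma solve (a x y : rat) : a != 0 -> a * x = y -> x = y / a.
Proof. by move=> ha <-; rewrite mulrAC mulfV ?mul1r. Qed.

Lemma KEY (n : rat) (j k : nat) :
  (if j is j'.+1 then Ju n j' * B j' k else 0) + Jd n j * B j k + Ju n j * B j.+1 k
  = (if k is k'.+1 then B j k' * Ju n k' else 0) - B j k * Jd n k + B j k.+1 * Ju n k
    + (n ^+ 2 - 1) * B j k.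
Proof.
rewrite /Jd /Ju.
case: j => [|j'].
  case: k => [|[|k']].
  - rewrite !bin0 bin0n /=. ring.
  - rewrite binS !bin0n /=. ring.
  - rewrite binS !bin0n /=. ring.
case: k => [|k'].
  rewrite !bin0 bin1. ring.
case: (ltnP j' k') => hjk.
  case: (ltnP j'.+1 k') => hjk2.
  - rewrite !bin_small //; try lia. ring.
  - have -> : k' = j'.+1 by lia.
    rewrite !binn !bin_small //; try lia. ring.
have [d ->] : exists d, j' = (k' + d)%N by exists (j' - k')%N; lia.
have nz1 : ((k' + d).+1%:R : rat) != 0 by rewrite pnatr_eq0.
have nz2 : (k'.+2%:R : rat) != 0 by rewrite pnatr_eq0.
have nz3 : (d.+1%:R : rat) != 0 by rewrite pnatr_eq0.
have nz4 : ((k' + d).+2%:R : rat) != 0 by rewrite pnatr_eq0.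
have h1 : ((k' + d).+1 * 'C(k' + d, k'.+1) = d * 'C((k'+d).+1, k'.+1))%N.
  by rewrite (mul_bin_down (k'+d).+1) subSS addKn.
have h2 : (k'.+2 * 'C((k'+d).+1, k'.+2) = d * 'C((k'+d).+1, k'.+1))%N.
  by rewrite mul_bin_left subSS addKn.
have h3 : (d.+1 * 'C((k'+d).+1, k') = k'.+1 * 'C((k'+d).+1, k'.+1))%N.
  by rewrite mul_bin_left -addnS addKn.
have h4 : (d.+1 * 'C((k'+d).+2, k'.+1) = (k'+d).+2 * 'C((k'+d).+1, k'.+1))%N.
  by rewrite (mul_bin_down (k'+d).+2) subSS -addnS addKn.
move: h1 h2 h3 h4 => /(congr1 (fun x => x%:R : rat)) h1 /(congr1 (fun x => x%:R : rat)) h2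
  /(congr1 (fun x => x%:R : rat)) h3 /(congr1 (fun x => x%:R : rat)) h4.
rewrite !natrM in h1 h2 h3 h4.
rewrite (@solve _ _ _ nz1 h1) (@solve _ _ _ nz2 h2) (@solve _ _ _ nz3 h3) (@solve _ _ _ nz3 h4).
move: nz1 nz2 nz3 nz4.
set b := B (k'+d).+1 k'.+1.
rewrite -!natr1 !natrD.
move=> nz1 nz2 nz3 nz4.
field.
by rewrite nz1 nz2 nz3.
Qed.

Lemma Lam_E N (i j : 'I_N) : LambdaN N i j = (-1)^+i *+ (i == j).
Proof. by rewrite /LambdaN !mxE. Qed.

Lemma LL N : LambdaN N *m LambdaN N = 1%:M.
Proof.
apply/matrixP => i j; rewrite /LambdaN mul_diag_mx !mxE.
by case: eqP => _; rewrite ?mulr1n ?mulr0n ?ss ?mulr0.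
Qed.

Lemma PL_E N (j i : 'I_N) : (PsiN N *m LambdaN N) j i = ('C(j,i))%:R * (-1)^+i.
Proof. by rewrite /LambdaN mul_mx_diag !mxE. Qed.

Lemma PLsq N : (PsiN N *m LambdaN N) *m (PsiN N *m LambdaN N) = 1%:M.
Proof.
apply/matrixP => j k; rewrite !mxE.
under eq_bigr => i _ do rewrite !PL_E.
rewrite -(@sum_ext j.+1 N (fun i : nat => ('C(j,i))%:R * (-1)^+i * (('C(i,k))%:R * (-1)^+k)) (ltn_ord j)); last first.
  by move=> i hi; rewrite bin_small // mulr0n !mul0r.
have -> : \sum_(0 <= i < j.+1) ('C(j,i))%:R * (-1)^+i * (('C(i,k))%:R * (-1)^+k) = (-1)^+k * S j k.
  by rewrite /S big_distrr; apply: eq_bigr => i _ /=; ring.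
rewrite S_val; case: (eqVneq j k) => [<-|ne].
  by rewrite eqxx mulrA ss mul1r.
have : (val j == val k) = false by apply/negbTE.
by move=> ->; rewrite !mulr0.
Qed.

Lemma PLsq' N : PsiN N *m LambdaN N *m PsiN N *m LambdaN N = 1%:M.
Proof. by rewrite -[RHS](PLsq N) mulmxA. Qed.

Lemma inv_uniq N (A X : 'M[rat]_N) : A *m X = 1%:M -> invmx A = X.
Proof.
move=> h; have [uA _] := mulmx1_unit h.
by rewrite -[invmx A]mulmx1 -h mulmxA mulVmx // mul1mx.
Qed.

Lemma Psi_inv N : invmx (PsiN N) = LambdaN N *m PsiN N *m LambdaN N.
Proof. by apply: inv_uniq; rewrite !mulmxA PLsq'. Qed.

Lemma Psi_unit N : PsiN N \in unitmx.
Proof.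
have h : PsiN N *m (LambdaN N *m PsiN N *m LambdaN N) = 1%:M by rewrite !mulmxA PLsq'.
by have [] := mulmx1_unit h.
Qed.

Lemma Vand j k : (\sum_(i < j.+1) 'C(j, i) * 'C(k, i))%N = 'C(j + k, j).
Proof.
rewrite addnC -(binomial.Vandermonde k j j); apply: eq_bigr => i _.
by rewrite bin_sub ?(leq_ord i) // mulnC.
Qed.

Lemma TN_E N : TN N = PsiN N *m (PsiN N)^T.
Proof.
apply/matrixP => j k; rewrite !mxE.
under eq_bigr => i _ do rewrite !mxE.
rewrite -(@sum_ext j.+1 N (fun i : nat => ('C(j,i))%:R * ('C(k,i))%:R) (ltn_ord j)); last first.
  by move=> i hi; rewrite bin_small // mulr0n !mul0r.
rewrite big_mkord -Vand natr_sum; apply: eq_bigr => i _; by rewrite natrM.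
Qed.

Lemma LtL N : (LambdaN N)^T = LambdaN N.
Proof. by rewrite /LambdaN tr_diag_mx. Qed.

Lemma PLP N : PsiN N *m LambdaN N *m PsiN N = LambdaN N.
Proof.
by rewrite -[RHS]mul1mx -(PLsq' N) -!mulmxA LL mulmx1.
Qed.

Lemma part3 N : (PsiN N)^T *m PsiN N = LambdaN N *m invmx (TN N) *m LambdaN N.
Proof.
have -> : invmx (TN N) = LambdaN N *m ((PsiN N)^T *m PsiN N) *m LambdaN N.
  apply: inv_uniq; rewrite TN_E.
  have e : (PsiN N)^T *m LambdaN N *m (PsiN N)^T = LambdaN N.
    by rewrite -{1}LtL -mulmxA -!trmx_mul PLP LtL.
  transitivity (PsiN N *m ((PsiN N)^T *m LambdaN N *m (PsiN N)^T) *m PsiN N *m LambdaN N).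
    by rewrite !mulmxA.
  by rewrite e PLsq'.
by rewrite !mulmxA LL mul1mx -mulmxA LL mulmx1.
Qed.

Definition Jn (N j k : nat) : rat :=
    (if j == k :> nat then
       (k%:R : rat) * (2 * (k%:R) ^+ 2 + 3 * k%:R + 2 - (N%:R) ^+ 2)
     else if j == k.+1 :> nat then
       (k.+1%:R : rat) * ((N%:R) ^+ 2 - (k.+1%:R) ^+ 2)
     else if k == j.+1 :> nat then
       (j.+1%:R : rat) * ((N%:R) ^+ 2 - (j.+1%:R) ^+ 2)
     else 0).

Lemma JN_E N (j k : 'I_N) : JN N j k = Jn N j k.
Proof. by rewrite mxE. Qed.

Lemma Jn0 N j i : (i.+1 < j)%N || (j.+1 < i)%N -> Jn N j i = 0.
Proof.
move=> h; rewrite /Jn.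
have -> : (j == i) = false by apply/eqP; lia.
have -> : (j == i.+1) = false by apply/eqP; lia.
have -> : (i == j.+1) = false by apply/eqP; lia.
by [].
Qed.

Lemma Jn_diag N j : Jn N j j = Jd N%:R j.
Proof. by rewrite /Jn eqxx. Qed.

Lemma Jn_sub N j : Jn N j.+1 j = Ju N%:R j.
Proof.
rewrite /Jn eqxx; have -> : (j.+1 == j) = false by apply/eqP; lia. by [].
Qed.

Lemma Jn_sup N j : Jn N j j.+1 = Ju N%:R j.
Proof.
rewrite /Jn eqxx; have -> : (j == j.+1) = false by apply/eqP; lia.
have -> : (j == j.+2) = false by apply/eqP; lia. by [].
Qed.

Lemma JNN N j : j.+1 = N -> Jn N j N = 0.
Proof.
move=> e; rewrite /Jn; have -> : (j == N) = false by apply/eqP; lia.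
have -> : (j == N.+1) = false by apply/eqP; lia.
rewrite -e eqxx subrr mulr0 //.
Qed.

Lemma sum_tri_ord (N c : nat) (F : nat -> rat) : (c < N)%N -> F N = 0 ->
  (forall i, (i.+1 < c)%N || (c.+1 < i)%N -> F i = 0) ->
  \sum_(i < N) F i = (if c is c'.+1 then F c' else 0) + F c + F c.+1.
Proof.
move=> hc hN H; rewrite -(@sum_tri N.+1 c F) // big_ord_recr /= hN addr0 //.
Qed.

Lemma JnN N j : (j < N)%N -> Jn N j N = 0.
Proof.
move=> h; case: (eqVneq j.+1 N) => [e|ne]; first exact: JNN.
apply: Jn0; apply/orP; right; lia.
Qed.

Lemma JN_M N : JN N = \matrix_(i, k) Jn N i k.
Proof. by apply/matrixP => i k; rewrite !mxE. Qed.

Lemma LJL N : LambdaN N *m JN N *m LambdaN N = \matrix_(i, k) ((-1)^+i * Jn N i k * (-1)^+k).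
Proof. by apply/matrixP => i k; rewrite /LambdaN mul_mx_diag mul_diag_mx !mxE. Qed.

Lemma sg1 b (x : rat) : (-1)^+b * x * (-1)^+b = x.
Proof. by rewrite mulrC mulrA ss mul1r. Qed.
Lemma sg2 b (x : rat) : (-1)^+b * x * (-1)^+b.+1 = - x.
Proof.
rewrite exprS; have := ss b; set s := (-1)^+b => h.
have -> : s * x * (-1 * s) = - (s * s) * x by ring.
by rewrite h mulN1r.
Qed.
Lemma sg3 b (x : rat) : (-1)^+b.+1 * x * (-1)^+b = - x.
Proof.
rewrite exprS; have := ss b; set s := (-1)^+b => h.
have -> : -1 * s * x * s = - (s * s) * x by ring.
by rewrite h mulN1r.
Qed.

Lemma FINAL N (a b : nat) :
  (if a is c'.+1 then Jn N a c' * ('C(c', b))%:R else 0)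
  + Jn N a a * ('C(a, b))%:R + Jn N a a.+1 * ('C(a.+1, b))%:R =
  - ((if b is c'.+1 then ('C(a, c'))%:R * ((-1) ^+ c' * Jn N c' b * (-1) ^+ b) else 0)
     + ('C(a, b))%:R * ((-1) ^+ b * Jn N b b * (-1) ^+ b) +
     ('C(a, b.+1))%:R * ((-1) ^+ b.+1 * Jn N b.+1 b * (-1) ^+ b))
  + ((N ^ 2)%:R - 1) * ('C(a, b))%:R.
Proof.
have K := KEY N%:R a b.
rewrite natrX.
case: a K => [|a] K; case: b K => [|b] K; rewrite ?Jn_diag ?Jn_sub ?Jn_sup.
all: rewrite ?sg1 ?sg2 ?sg3.
all: lra.
Qed.

Lemma JPsi N : JN N *m PsiN N = PsiN N *m (- (LambdaN N *m JN N *m LambdaN N) + ((N ^ 2)%:R - 1) *: 1%:M).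
Proof.
apply/matrixP => j k.
rewrite mulmxDr mulmxN -scalemxAr mulmx1 LJL JN_M /PsiN !mxE.
under eq_bigr => i _ do rewrite !mxE.
under [X in _ = - X + _]eq_bigr => i _ do rewrite !mxE.
rewrite (@sum_tri_ord N j (fun i => Jn N j i * ('C(i, k))%:R)) //; last first.
- by move=> i hi; rewrite Jn0 // mul0r.
- by rewrite JnN // mul0r.
rewrite (@sum_tri_ord N k (fun i => ('C(j, i))%:R * ((-1)^+i * Jn N i k * (-1)^+k))) //; last first.
- by move=> i hi; rewrite Jn0 ?mulr0 ?mul0r ?mulr0 // orbC.
- by rewrite bin_small // mulr0n mul0r.
case: j => a ha; case: k => b hb /=.
exact: FINAL.
Qed.

Theorem mainTheorem8 (N : nat) (hN : (1 <= N)%N) :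
  invmx (PsiN N) *m JN N *m PsiN N
    = - (LambdaN N *m JN N *m LambdaN N) + ((N ^ 2)%:R - 1) *: 1%:M
  /\ (PsiN N *m LambdaN N) *m (PsiN N *m LambdaN N) = 1%:M
  /\ (PsiN N)^T *m PsiN N = LambdaN N *m invmx (TN N) *m LambdaN N.
Proof.
split; last split.
- rewrite -mulmxA JPsi mulmxA mulVmx ?Psi_unit // mul1mx //.
- exact: PLsq.
- exact: part3.
Qed.
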